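(* Let $m,n\ge 2$ and let $G$ be the ordered graph with vertices $v_1<\dots<v_{m+n}$ whose only edges are $v_1v_{m+n}$ and $v_mv_{m+1}$ (two nested edges: one joining the outermost vertices and one joining the innermost vertices of the parts $\{v_1,\dots,v_m\}$ and $\{v_{m+1},\dots,v_{m+n}\}$). Then $R(G)=2m+2n-2$.
   Context: An ordered graph is a graph together with a specified linear ordering of its vertex set. An ordered graph $G$ is contained in an ordered graph $H$ if there is an order-preserving injection $V(G)\to V(H)$ mapping edges to edges. $R(G)$ denotes the 2-color ordered Ramsey number: the minimum $N$ such that every 2-coloring of the edges of the ordered complete graph on $N$ vertices contains a monochromatic copy of $G$. *)

(* Defs.v *)
From mathcomp Require Import all_boot.
Set Implicit Arguments. Unset Strict Implicit. Unset Printing Implicit Defensive.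

(* An ordered graph on k vertices: vertex set 'I_k with its natural order,
   edges given by a (symmetric, irreflexive) boolean relation E. *)
Definition ordered_graph (k : nat) := rel 'I_k.

(* A 2-colouring of the edges of the ordered complete graph on 'I_N:
   the edge {u,v} with u < v receives colour c u v (values of c on
   pairs u >= v are irrelevant). *)
Definition coloring (N : nat) := 'I_N -> 'I_N -> bool.

Definition mono_copy (k N : nat) (G : ordered_graph k) (c : coloring N) (b : bool) :=
  exists f : 'I_k -> 'I_N,
    (forall i j : 'I_k, i < j -> f i < f j) /\
    (forall i j : 'I_k, i < j -> G i j -> c (f i) (f j) = b).

Definition ramsey_arrows (k : nat) (G : ordered_graph k) (N : nat) :=
  forall c : coloring N, exists b : bool, mono_copy G c b.

Definition is_ordered_ramsey_number (k : nat) (G : ordered_graph k) (r : nat) :=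
  ramsey_arrows G r /\ forall N, N < r -> ~ ramsey_arrows G N.

(* The graph of Proposition 4.1: vertices v_1 < ... < v_{m+n} are indices
   0 .. m+n-1; edges v_1 v_{m+n} (indices 0, m+n-1) and v_m v_{m+1}
   (indices m-1, m). *)
Definition nested_two_edges (m n : nat) : ordered_graph (m + n) :=
  fun i j =>
    let e x y := ((val i == x) && (val j == y)) || ((val i == y) && (val j == x)) in
    e 0 (m + n - 1) || e (m - 1) m.

(* Main.v *)
Require Import Defs.
From mathcomp Require Import all_boot.
From mathcomp Require Import zify.

Section S.
Variables m n N : nat.
Hypothesis hm : 2 <= m.
Hypothesis hn : 2 <= n.

Definition gf (a x y d t : nat) : nat :=
  if t < m - 1 then a + t else if t == m - 1 then x else if t == m then y
  else d + t + 1 - (m + n).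

Lemma build (c : coloring N) (b : bool) (a x y d : 'I_N) :
  a + (m - 1) <= x -> x < y -> y + (n - 1) <= d -> c a d = b -> c x y = b ->
  mono_copy (@nested_two_edges m n) c b.
Proof.
move=> h1 h2 h3 ca cx.
have gb : forall i : 'I_(m + n), gf a x y d i < N.
  move=> i; have := ltn_ord i; have := ltn_ord d; rewrite /gf.
  by repeat case: ifP; lia.
exists (fun i => Ordinal (gb i)); split.
  move=> i j; have := ltn_ord i; have := ltn_ord j; rewrite /= /gf.
  by repeat case: ifP; lia.
move=> i j ij; rewrite /nested_two_edges.
have jlt := ltn_ord j.
rewrite /=.
case/orP=> [/orP [] | /orP []] /andP [] /eqP hi /eqP hj; try lia.
- have -> : Ordinal (gb i) = a by apply: val_inj; rewrite /= /gf hi; repeat case: ifP; lia.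
  have -> : Ordinal (gb j) = d by apply: val_inj; rewrite /= /gf hj; repeat case: ifP; lia.
  by [].
- have -> : Ordinal (gb i) = x by apply: val_inj; rewrite /= /gf hi; repeat case: ifP; lia.
  have -> : Ordinal (gb j) = y by apply: val_inj; rewrite /= /gf hj; repeat case: ifP; lia.
  by [].
Qed.

End S.

Section T.
Variable N : nat.
Lemma mono_step k (f : 'I_k -> 'I_N) :
  (forall i j : 'I_k, i < j -> f i < f j) ->
  forall dd (i j : 'I_k), (j : nat) = i + dd -> f i + dd <= f j.
Proof.
move=> fm; elim=> [|dd IH] i j e.
  have -> : i = j by apply: val_inj; rewrite /= e addn0.
  by rewrite addn0.
have lt : i + dd < k by have := ltn_ord j; lia.
have := IH i (Ordinal lt) erefl.
have := fm (Ordinal lt) j; rewrite /= e => h; have := h ltac:(lia); lia.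
Qed.

End T.

Theorem proposition4p1 (m n : nat) (hm : 2 <= m) (hn : 2 <= n) :
  @is_ordered_ramsey_number (m + n) (@nested_two_edges m n) (2 * m + 2 * n - 2).
Proof.
split.
- move=> c.
  pose N := 2 * m + 2 * n - 2.
  have l0 : 0 < N by lia.
  have l1 : N - 1 < N by lia.
  have l2 : m - 1 < N by lia.
  have l3 : 2 * m + n - 2 < N by lia.
  have l4 : 2 * m - 2 < N by lia.
  have l5 : 2 * m - 1 < N by lia.
  pose a1 := Ordinal l0; pose d1 := Ordinal l1; pose a2 := Ordinal l2;
  pose d2 := Ordinal l3; pose a3 := Ordinal l4; pose d3 := Ordinal l5.
  case E1: (c a1 d1); case E2: (c a2 d2); case E3: (c a3 d3);
  let t := first [ apply: (@build m n N hm hn c _ a1 a2 d2 d1); solve [done | rewrite /= /N; lia]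
        | apply: (@build m n N hm hn c _ a1 a3 d3 d1); solve [done | rewrite /= /N; lia]
        | apply: (@build m n N hm hn c _ a2 a3 d3 d2); solve [done | rewrite /= /N; lia] ] in
  first [ exists true; t | exists false; t ].
- move=> N hN hr.
  have [b [f [fm fe]]] := hr (fun u v => m + n - 1 <= v - u).
  have k0 : 0 < m + n by lia.
  have k1 : m + n - 1 < m + n by lia.
  have k2 : m - 1 < m + n by lia.
  have k3 : m < m + n by lia.
  have e1 := fe (Ordinal k0) (Ordinal k1) ltac:(rewrite /=; lia)
     ltac:(rewrite /nested_two_edges /= !eqxx; by []).
  have e2 := fe (Ordinal k2) (Ordinal k3) ltac:(rewrite /=; lia)
     ltac:(rewrite /nested_two_edges /= !eqxx; rewrite !orbT; by []).
  have s1 := @mono_step N _ f fm (m - 1) (Ordinal k0) (Ordinal k2) ltac:(rewrite /=; lia).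
  have s2 := @mono_step N _ f fm (n - 1) (Ordinal k3) (Ordinal k1) ltac:(rewrite /=; lia).
  have s3 := fm (Ordinal k2) (Ordinal k3) ltac:(rewrite /=; lia).
  have := ltn_ord (f (Ordinal k1)).
  clear fe; move: e1 e2 s1 s2 s3; case: b => /= e1 e2; lia.
Qed.
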